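(* Let $N\ge2$ and $k\ge2$ be fixed integers and $\epsilon>0$. Let the class distribution be $\pi_i=\frac{\epsilon}{(N-1)(1+\epsilon)}$ for $1\le i\le N-1$ and $\pi_N=\frac{1}{1+\epsilon}$. In one round of the large-batch model of the $k$IC batch labeling algorithm, the resulting class distribution $\boldsymbol{\pi}'$ and the single-round average query rate $R_2^{kIC}=1/(k\,P(s\in\mathcal{L}))$ satisfy, as $\epsilon\to0$, $$\pi'_N=1-k\epsilon+o(\epsilon),\qquad \pi'_i=\frac{k\epsilon}{N-1}+o(\epsilon)\ (1\le i\le N-1),\qquad R_2^{kIC}=\frac{1}{k-1}+\frac{k}{(k-1)^2}\epsilon+o(\epsilon).$$
   Context: Large-batch model of one round: each $k$IC query consists of $k$ samples with i.i.d. classes drawn from $\boldsymbol{\pi}$; an error-free oracle reveals which samples share a class; one representative of each class present is returned to the next batch and the other samples are settled. $P(s\in\mathcal{L})$ is the expected number of settled samples per query divided by $k$, i.e. $1-\frac1k\sum_{j=1}^N(1-(1-\pi_j)^k)$, and $\pi'_i=\frac{1-(1-\pi_i)^k}{N-\sum_{j}(1-\pi_j)^k}$ is the class distribution of the returned batch. *)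

(* Defs.v *)
From Stdlib Require Import Reals.
From Coquelicot Require Import Coquelicot.
Open Scope R_scope.

(* Class distribution of Corollary 4; classes are numbered 1..N.
   pi_N = 1/(1+eps), pi_i = eps/((N-1)(1+eps)) for 1 <= i <= N-1. *)
Definition pi_eps (N : nat) (eps : R) (i : nat) : R :=
  if Nat.eqb i N then 1 / (1 + eps) else eps / (INR (N - 1) * (1 + eps)).

Definition sum_miss (N k : nat) (p : nat -> R) : R :=
  sum_f_R0 (fun j => (1 - p (S j)) ^ k) (N - 1).

Definition settled_prob (N k : nat) (p : nat -> R) : R :=
  1 - / INR k * sum_f_R0 (fun j => 1 - (1 - p (S j)) ^ k) (N - 1).

Definition next_dist (N k : nat) (p : nat -> R) (i : nat) : R :=
  (1 - (1 - p i) ^ k) / (INR N - sum_miss N k p).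

Definition rate2 (N k : nat) (p : nat -> R) : R :=
  1 / (INR k * settled_prob N k p).

Definition eq_up_to_o_eps (f g : R -> R) : Prop :=
  filterlim (fun e => (f e - g e) / e) (at_right 0) (locally 0).

(* Main.v *)
Require Import Defs.
From Stdlib Require Import Reals Lra Lia.
From Coquelicot Require Import Coquelicot.
Open Scope R_scope.

Lemma sum_const (f : nat -> R) (c : R) (n : nat) :
  (forall j, (j <= n)%nat -> f j = c) -> sum_f_R0 f n = INR (S n) * c.
Proof.
  induction n; intros H.
  - simpl. rewrite H by lia. ring.
  - rewrite tech5, IHn by (intros; apply H; lia). rewrite H by lia.
    rewrite (S_INR (S n)). ring.
Qed.

Lemma sum_split (F : nat -> R) (N : nat) (c : R) :
  (2 <= N)%nat -> (forall j, (j <= N - 2)%nat -> F j = c) ->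
  sum_f_R0 F (N - 1) = INR (N - 1) * c + F (N - 1)%nat.
Proof.
  intros HN H. replace (N - 1)%nat with (S (N - 2)) by lia.
  rewrite tech5, (sum_const F c) by exact H. reflexivity.
Qed.

Lemma small_o (h : R -> R) :
  is_derive h 0 0 -> h 0 = 0 ->
  filterlim (fun e => h e / e) (at_right 0) (locally 0).
Proof.
  intros Hd H0. apply is_derive_Reals in Hd.
  apply (filterlim_locally (fun e => h e / e) 0). intros eps.
  destruct (Hd eps (cond_pos eps)) as [d Hdl].
  exists d. intros y Hy Hpos.
  assert (Hy0 : y <> 0) by lra.
  assert (Habs : Rabs y < d).
  { change (Rabs (y - 0) < d) in Hy. rewrite Rminus_0_r in Hy. exact Hy. }
  specialize (Hdl y Hy0 Habs). rewrite Rplus_0_l, H0 in Hdl.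
  change (Rabs (h y / y - 0) < eps).
  replace (h y / y - 0) with ((h y - 0) / y - 0) by (field; exact Hy0). exact Hdl.
Qed.

Lemma o_of_deriv (f g : R -> R) (l : R) :
  is_derive f 0 l -> is_derive g 0 l -> f 0 = g 0 -> eq_up_to_o_eps f g.
Proof.
  intros Hf Hg H0. unfold eq_up_to_o_eps.
  apply (small_o (fun e => f e - g e)).
  - replace 0 with (l - l) at 2 by ring. apply (is_derive_minus f g); assumption.
  - rewrite H0; ring.
Qed.

Lemma o_of_deriv' (f F g : R -> R) (l : R) :
  (forall e, f e = F e) ->
  is_derive F 0 l -> is_derive g 0 l -> F 0 = g 0 -> eq_up_to_o_eps f g.
Proof.
  intros Hext HF Hg H0. apply (o_of_deriv f g l).
  - apply (is_derive_ext F f); [intros; symmetry; apply Hext | exact HF].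
  - exact Hg.
  - rewrite Hext; exact H0.
Qed.

Section S.
Variables (N k : nat) (HN : (2 <= N)%nat) (Hk : (2 <= k)%nat).
Let M := INR (N - 1).
Lemma pi_small e j : (j <= N - 2)%nat -> pi_eps N e (S j) = e / (M * (1 + e)).
Proof. intros Hj. unfold pi_eps. replace (Nat.eqb (S j) N) with false. reflexivity.
  symmetry; apply Nat.eqb_neq; lia. Qed.
Lemma pi_big e : pi_eps N e N = 1 / (1 + e).
Proof. unfold pi_eps. rewrite Nat.eqb_refl. reflexivity. Qed.
Lemma INR_N : INR N = M + 1.
Proof. unfold M. replace N with (S (N - 1)) at 1 by lia. rewrite S_INR. ring. Qed.

Lemma sum_miss_cf e : sum_miss N k (pi_eps N e) =
  M * (1 - e / (M * (1 + e))) ^ k + (1 - 1 / (1 + e)) ^ k.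
Proof.
  unfold sum_miss. rewrite (sum_split _ N ((1 - e / (M * (1 + e))) ^ k)); auto.
  - replace (S (N - 1)) with N by lia. rewrite pi_big. reflexivity.
  - intros j Hj. rewrite pi_small by lia. reflexivity.
Qed.

Lemma settled_cf e : settled_prob N k (pi_eps N e) =
  1 - / INR k * (M * (1 - (1 - e / (M * (1 + e))) ^ k) + (1 - (1 - 1 / (1 + e)) ^ k)).
Proof.
  unfold settled_prob. rewrite (sum_split _ N (1 - (1 - e / (M * (1 + e))) ^ k)); auto.
  - replace (S (N - 1)) with N by lia. rewrite pi_big. reflexivity.
  - intros j Hj. rewrite pi_small by lia. reflexivity.
Qed.

Lemma M_pos : M > 0.
Proof. unfold M. apply lt_0_INR. lia. Qed.
Lemma k_gt1 : INR k > 1.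
Proof. replace 1 with (INR 1) by reflexivity. apply lt_INR. lia. Qed.
Lemma z_k : 0 ^ k = 0.
Proof. apply pow_i. lia. Qed.
Lemma z_pk : 0 ^ Init.Nat.pred k = 0.
Proof. apply pow_i. lia. Qed.

Ltac simp := pose proof M_pos; pose proof k_gt1;
  try replace (1 + - (1 * / (1 + 0))) with 0 by field;
  try replace (1 + - (0 * / (M * (1 + 0)))) with 1 by (field; lra);
  try rewrite z_k; try rewrite z_pk; try rewrite !pow1;
  try replace (INR k * (1 + - (/ INR k * (M * (1 + - (1)) + (1 + - 0))))) with (INR k - 1) by (field; lra).
Ltac fin := auto_derive; simp; [repeat split; try lra; nra | field; lra].

Lemma d1 : is_derive (fun e => (1 - (1 - 1 / (1 + e)) ^ k) /
   (M + 1 - (M * (1 - e / (M * (1 + e))) ^ k + (1 - 1 / (1 + e)) ^ k))) 0 (- INR k).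
Proof. fin. Qed.
Lemma d2 : is_derive (fun e => (1 - (1 - e / (M * (1 + e))) ^ k) /
   (M + 1 - (M * (1 - e / (M * (1 + e))) ^ k + (1 - 1 / (1 + e)) ^ k))) 0 (INR k / M).
Proof. fin. Qed.
Lemma d3 : is_derive (fun e => 1 / (INR k * (1 - / INR k * (M * (1 - (1 - e / (M * (1 + e))) ^ k) + (1 - (1 - 1 / (1 + e)) ^ k))))) 0
  (INR k / (INR k - 1) ^ 2).
Proof. fin. Qed.
End S.

Theorem corollary4 (N k : nat) (HN : (2 <= N)%nat) (Hk : (2 <= k)%nat) :
  eq_up_to_o_eps (fun e => next_dist N k (pi_eps N e) N)
                 (fun e => 1 - INR k * e) /\
  (forall i : nat, (1 <= i <= N - 1)%nat ->
     eq_up_to_o_eps (fun e => next_dist N k (pi_eps N e) i)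
                    (fun e => INR k * e / INR (N - 1))) /\
  eq_up_to_o_eps (fun e => rate2 N k (pi_eps N e))
                 (fun e => 1 / (INR k - 1) + INR k / (INR k - 1) ^ 2 * e).
Proof.
  assert (HM : INR (N - 1) > 0) by (eapply M_pos; eauto).
  assert (Hk1 : INR k > 1) by (eapply k_gt1; eauto).
  assert (Z1 : 0 ^ k = 0) by (eapply z_k; eauto).
  split; [|split].
  - apply (o_of_deriv' _ (fun e => (1 - (1 - 1 / (1 + e)) ^ k) /
      (INR (N - 1) + 1 - (INR (N - 1) * (1 - e / (INR (N - 1) * (1 + e))) ^ k + (1 - 1 / (1 + e)) ^ k))) _ (- INR k)).
    + intro e. unfold next_dist. rewrite (sum_miss_cf N k HN Hk), pi_big, (INR_N N k HN Hk). reflexivity.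
    + eapply d1; eauto.
    + auto_derive; auto; ring.
    + replace (1 - 1 / (1 + 0)) with 0 by field.
      replace (1 - 0 / (INR (N - 1) * (1 + 0))) with 1 by (field; lra).
      rewrite Z1, pow1. field. lra.
  - intros i Hi.
    apply (o_of_deriv' _ (fun e => (1 - (1 - e / (INR (N - 1) * (1 + e))) ^ k) /
      (INR (N - 1) + 1 - (INR (N - 1) * (1 - e / (INR (N - 1) * (1 + e))) ^ k + (1 - 1 / (1 + e)) ^ k))) _ (INR k / INR (N - 1))).
    + intro e. unfold next_dist. rewrite (sum_miss_cf N k HN Hk), (INR_N N k HN Hk).
      replace i with (S (i - 1)) by lia. rewrite (pi_small N k HN Hk) by lia. reflexivity.
    + eapply d2; eauto.
    + auto_derive; [lra | field; lra].
    + replace (1 - 1 / (1 + 0)) with 0 by field.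
      replace (1 - 0 / (INR (N - 1) * (1 + 0))) with 1 by (field; lra).
      rewrite Z1, pow1. field. lra.
  - apply (o_of_deriv' _ (fun e => 1 / (INR k * (1 - / INR k * (INR (N - 1) * (1 - (1 - e / (INR (N - 1) * (1 + e))) ^ k) + (1 - (1 - 1 / (1 + e)) ^ k))))) _ (INR k / (INR k - 1) ^ 2)).
    + intro e. unfold rate2. rewrite (settled_cf N k HN Hk). reflexivity.
    + eapply d3; eauto.
    + auto_derive; [auto | field; lra].
    + replace (1 - 1 / (1 + 0)) with 0 by field.
      replace (1 - 0 / (INR (N - 1) * (1 + 0))) with 1 by (field; lra).
      rewrite Z1, pow1. field. lra.
Qed.
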